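(* Let $\alpha\ge1$, $\beta\ge0$ and $\varepsilon>0$ be reals, and let $\mathscr{C}$ be a graph class closed under taking the subgraph formed by any union of connected components. Suppose $\mathsf{A}$ is a deterministic LOCAL algorithm with round complexity $r$ which on every $G\in\mathscr{C}$ outputs a dominating set of size at most $\alpha\,\mathrm{MDS}(G)+\beta$. Then there is a deterministic LOCAL algorithm with round complexity $r+O(\beta/\varepsilon)$ which on every $G\in\mathscr{C}$ outputs a dominating set of size at most $(\alpha+\varepsilon)\,\mathrm{MDS}(G)$.
   Context: $\mathrm{MDS}(G)$ is the minimum size of a dominating set of $G$. Deterministic LOCAL model: distinct positive integer identifiers, synchronous rounds of unbounded message exchange with neighbours and unbounded local computation; round complexity $r$ means every vertex fixes its output after $r$ rounds; the output is the set of vertices outputting ''selected''. *)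

(* Defs.v *)
From Stdlib Require Import Reals.
From mathcomp Require Import all_boot.

Set Implicit Arguments.
Unset Strict Implicit.
Unset Printing Implicit Defensive.

Record graph := Graph {
  vert : finType;
  adj : rel vert;
  adj_sym : symmetric adj;
  adj_irr : irreflexive adj
}.

Definition dominating (G : graph) (D : {set vert G}) : bool :=
  [forall v, (v \in D) || [exists u in D, adj u v]].

Definition has_dom_set_of_size (G : graph) (k : nat) : bool :=
  [exists D : {set vert G}, dominating D && (#|D| == k)].

Lemma has_dom_set_ex (G : graph) : exists k, has_dom_set_of_size G k.
Proof.
exists #|[set: vert G]|; apply/existsP; exists [set: vert G].
rewrite eqxx andbT; apply/forallP => v; by rewrite in_setT.
Qed.

Definition MDS (G : graph) : nat := ex_minn (has_dom_set_ex G).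

Definition induced (G : graph) (S : {set vert G}) : graph.
Proof.
refine (@Graph ({x : vert G | x \in S} : finType)
          (fun x y => adj (val x) (val y)) _ _).
- by move=> x y; rewrite adj_sym.
- by move=> x; rewrite adj_irr.
Defined.

Definition union_of_components (G : graph) (S : {set vert G}) : Prop :=
  forall u v, adj u v -> u \in S -> v \in S.

Definition closed_under_components (C : graph -> Prop) : Prop :=
  forall (G : graph) (S : {set vert G}), C G -> union_of_components S ->
    C (induced S).

Definition valid_ids (G : graph) (id : vert G -> nat) : Prop :=
  injective id /\ forall v, 0 < id v.

Fixpoint ball (G : graph) (v : vert G) (k : nat) : {set vert G} :=
  match k with
  | 0 => [set v]
  | k'.+1 => ball v k' :|: [set w | [exists u in ball v k', adj u w]]
  end.

Definition inner_ball (G : graph) (v : vert G) (r : nat) : {set vert G} :=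
  if r is k.+1 then ball v k else set0.

(* Edges that v learns about in r rounds: those with at least one endpoint
   at distance < r from v. *)
Definition known_edge (G : graph) (v : vert G) (r : nat) (x y : vert G) : bool :=
  adj x y && ((x \in inner_ball v r) || (y \in inner_ball v r)).

Definition same_view (G : graph) (id : vert G -> nat) (v : vert G)
    (G' : graph) (id' : vert G' -> nat) (v' : vert G') (r : nat) : Prop :=
  exists f : vert G -> vert G',
    [/\ f v = v',
        forall x, x \in ball v r -> f x \in ball v' r /\ id' (f x) = id x,
        forall y, y \in ball v' r -> exists2 x, x \in ball v r & f x = y
      & forall x y, x \in ball v r -> y \in ball v r ->
          known_edge v r x y = known_edge v' r (f x) (f y)].

Definition algorithm := forall G : graph, (vert G -> nat) -> vert G -> bool.

(* Round complexity r: the output of each vertex is a function of its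
   r-round view (the information a full-information r-round protocol gathers). *)
Definition local_rounds (A : algorithm) (r : nat) : Prop :=
  forall (G : graph) (id : vert G -> nat) (v : vert G)
         (G' : graph) (id' : vert G' -> nat) (v' : vert G'),
    valid_ids id -> valid_ids id' -> same_view id v id' v' r ->
    A G id v = A G' id' v'.

Definition output (A : algorithm) (G : graph) (id : vert G -> nat) : {set vert G} :=
  [set v | A G id v].
Arguments output A G id : clear implicits.

(* Main.v *)
Require Import Defs.
From Stdlib Require Import Reals.
From mathcomp Require Import all_boot.
From Stdlib Require Import Lra ZArith.
From mathcomp Require Import zify.
Set Implicit Arguments. Unset Strict Implicit. Unset Printing Implicit Defensive.


Section Balls.
Variable G : graph.
Implicit Types (u v w x y : vert G).

Lemma ball_center v k : v \in ball v k.
Proof. elim: k => [|k IH] /=; first by rewrite in_set1. by rewrite in_setU IH. Qed.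

Lemma ballS v k x : (x \in ball v k.+1) = (x \in ball v k) || [exists u in ball v k, adj u x].
Proof. by rewrite /= in_setU in_set. Qed.

Lemma ball_sub1 v k : ball v k \subset ball v k.+1.
Proof. by apply/subsetP => x; rewrite ballS => ->. Qed.

Lemma ball_mono v k k' : k <= k' -> ball v k \subset ball v k'.
Proof.
move=> /subnK <-; elim: (k' - k) => [|n IH] //=.
by apply: subset_trans IH (ball_sub1 _ _).
Qed.

Lemma ball_adj v k u x : u \in ball v k -> adj u x -> x \in ball v k.+1.
Proof. by move=> hu ha; rewrite ballS; apply/orP; right; apply/existsP; exists u; rewrite hu. Qed.

Lemma ball_tri u w a x b : w \in ball u a -> x \in ball w b -> x \in ball u (a + b).
Proof.
move=> hw; elim: b x => [|b IH] x /=.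
  by rewrite in_set1 addn0 => /eqP ->.
rewrite in_setU in_set => /orP [/IH h|/existsP [y /andP [hy ha]]].
  by rewrite addnS (subsetP (ball_sub1 _ _)).
by rewrite addnS; apply: ball_adj (IH _ hy) ha.
Qed.

Lemma ball_sym u v k : u \in ball v k -> v \in ball u k.
Proof.
elim: k u => [|k IH] u /=; first by rewrite !in_set1 eq_sym.
rewrite in_setU in_set => /orP [/IH h|/existsP [y /andP [hy ha]]].
  by rewrite (subsetP (ball_sub1 _ _)).
have h1 : y \in ball u 1 by apply: ball_adj (ball_center _ _) _; rewrite adj_sym.
by have := ball_tri h1 (IH _ hy); rewrite add1n.
Qed.

Lemma ball_level u j k x : x \in ball u j -> x \notin ball u k ->
  exists y, (y \in ball u k.+1) && (y \notin ball u k).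
Proof.
elim: j x => [|j IH] x.
  by rewrite /= in_set1 => /eqP ->; rewrite ball_center.
rewrite ballS => /orP [/IH h|/existsP [w /andP [hw ha]]] hx; first exact: h.
case hwk: (w \in ball u k); last exact: (IH _ hw (negbT hwk)).
by exists x; rewrite hx (ball_adj hwk ha).
Qed.

Lemma ball_count (K D : {set vert G}) u :
  (forall k, ball u k \subset K) ->
  (forall x, x \in K -> (x \in D) || [exists d in D, adj d x]) ->
  forall n j x, x \in ball u j -> x \notin ball u (3 * n) ->
    n < #|D :&: ball u (3 * n).+2|.
Proof.
move=> hK hD; elim=> [|n IH] j x hx hn.
  have := hD u (subsetP (hK 0) _ (ball_center u 0)).
  case/orP=> [hu|/existsP [d /andP [hd ha]]]; rewrite card_gt0; apply/set0Pn.
    exists u; rewrite in_setI hu andTb; exact: ball_center.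
  exists d; rewrite in_setI hd andTb.
  have : d \in ball u 1 by apply: ball_adj (ball_center u 0) _; rewrite adj_sym.
  exact: (subsetP (ball_mono u (isT : 1 <= 2))).
have e : 3 * n.+1 = (3 * n).+3 by lia.
rewrite e in hn *.
have [y /andP [hy1 hy2]] := ball_level hx hn.
have hyn : y \notin ball u (3 * n).
  apply: contra hy2; apply/subsetP/ball_mono; lia.
have IHy := IH _ _ hy1 hyn.
have := hD y (subsetP (hK _) _ hy1).
have hdy : forall d, d \in D -> (d == y) || adj d y ->
    n.+1 < #|D :&: ball u (3 * n).+4.+1|.
  move=> d hd hdy.
  have hd1 : d \in ball u (3 * n).+4.+1.
    case/orP: hdy => [/eqP ->|ha]; first by apply: (subsetP (ball_sub1 _ _)).
    by apply: ball_adj hy1 _; rewrite adj_sym.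
  have hd2 : d \notin ball u (3 * n).+2.
    apply/negP => hd2; case/orP: hdy => [/eqP hdy|ha].
      by move: hy2; rewrite -hdy (subsetP (ball_sub1 _ _) _ hd2).
    by move: hy2; rewrite (ball_adj hd2 ha).
  have hsub : d |: (D :&: ball u (3 * n).+2) \subset D :&: ball u (3 * n).+4.+1.
    apply/subsetP => z; rewrite !in_setU1 !in_setI => /orP [/eqP ->|/andP [-> hz]].
      by rewrite hd hd1.
    rewrite andTb; apply: (subsetP (ball_mono _ _)) hz; lia.
  have := subset_leq_card hsub; rewrite cardsU1 in_setI (negbTE hd2) andbF add1n.
  by apply: leq_trans.
case/orP=> [hy|/existsP [d /andP [hd ha]]].
  by apply: (hdy y hy); rewrite eqxx.
by apply: (hdy d hd); rewrite ha orbT.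
Qed.
End Balls.

Lemma inner_sub (G : graph) (v : vert G) k R : k < R -> ball v k \subset inner_ball v R.
Proof. by case: R => // R hk; apply: ball_mono. Qed.

Section View.
Variables (G G' : graph) (id : vert G -> nat) (id' : vert G' -> nat).
Variables (v : vert G) (v' : vert G') (R : nat) (f : vert G -> vert G').
Hypothesis hinj : injective id.
Hypothesis hv : f v = v'.
Hypothesis hball : forall x, x \in ball v R -> f x \in ball v' R /\ id' (f x) = id x.
Hypothesis hsurj : forall y, y \in ball v' R -> exists2 x, x \in ball v R & f x = y.
Hypothesis hke : forall x y, x \in ball v R -> y \in ball v R ->
          known_edge v R x y = known_edge v' R (f x) (f y).

Lemma view_inj : {in ball v R &, injective f}.
Proof.
move=> x y hx hy e; apply: hinj.
by rewrite -(hball hx).2 -(hball hy).2 e.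
Qed.

Lemma view_corr k : k <= R -> forall x, x \in ball v R ->
  (x \in ball v k) = (f x \in ball v' k).
Proof.
elim: k => [|k IH] hk x hx.
  rewrite /= !in_set1 -hv; apply/eqP/eqP => [->//|e].
  by apply: view_inj => //; apply: ball_center.
have hk' : k <= R by apply: ltnW.
rewrite !ballS; apply/idP/idP.
  case/orP=> [h|/existsP [u /andP [hu ha]]].
    by rewrite -IH ?h.
  have huR : u \in ball v R by apply: (subsetP (ball_mono _ hk')).
  have hfu : f u \in ball v' k by rewrite -IH.
  have : known_edge v R u x.
    by rewrite /known_edge ha (subsetP (inner_sub _ hk) _ hu).
  rewrite hke // /known_edge => /andP [ha' _].
  apply/orP; right; apply/existsP; exists (f u); by rewrite hfu ha'.
case/orP=> [h|/existsP [w /andP [hw ha]]].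
  by rewrite IH ?h.
have hwR : w \in ball v' R by apply: (subsetP (ball_mono _ hk')).
have [u huR hfu] := hsurj hwR.
have hu : u \in ball v k by rewrite IH // hfu.
have : known_edge v' R (f u) (f x).
  by rewrite /known_edge hfu ha (subsetP (inner_sub _ hk) _ hw).
rewrite -hke // /known_edge => /andP [ha' _].
apply/orP; right; apply/existsP; exists u; by rewrite hu ha'.
Qed.

Lemma view_img k : k <= R -> f @: ball v k = ball v' k.
Proof.
move=> hk; apply/setP => y; apply/imsetP/idP.
  case=> x hx ->; rewrite -view_corr //.
  exact: (subsetP (ball_mono _ hk)).
move=> hy; have hyR : y \in ball v' R by apply: (subsetP (ball_mono _ hk)).
have [x hxR hfx] := hsurj hyR.
by exists x => //; rewrite view_corr // hfx.
Qed.

Lemma view_adj k x y : k < R -> x \in ball v k -> y \in ball v k ->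
  adj x y = adj (f x) (f y).
Proof.
move=> hk hx hy.
have hk' : k <= R by apply: ltnW.
have hxR : x \in ball v R by apply: (subsetP (ball_mono _ hk')).
have hyR : y \in ball v R by apply: (subsetP (ball_mono _ hk')).
have := hke hxR hyR; rewrite /known_edge (subsetP (inner_sub _ hk) _ hx).
have hfx : f x \in ball v' k by rewrite -view_corr.
by rewrite (subsetP (inner_sub _ hk) _ hfx) !orTb !andbT.
Qed.

Lemma view_mono r : r <= R -> same_view id v id' v' r.
Proof.
move=> hr; exists f; split => //.
- move=> x hx; have hxR : x \in ball v R by apply: (subsetP (ball_mono _ hr)).
  by split; [rewrite -view_corr | exact: (hball hxR).2].
- move=> y hy; have hyR : y \in ball v' R by apply: (subsetP (ball_mono _ hr)).
  have [x hxR hfx] := hsurj hyR.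
  by exists x => //; rewrite view_corr // hfx.
move=> x y hx hy.
have hxR : x \in ball v R by apply: (subsetP (ball_mono _ hr)).
have hyR : y \in ball v R by apply: (subsetP (ball_mono _ hr)).
case: r hr hx hy => [|k] hr hx hy; first by rewrite /known_edge /= !in_set0 !andbF.
rewrite /known_edge /= -!view_corr //; try by apply: ltnW.
case hor: ((x \in ball v k) || (y \in ball v k)); rewrite ?andbF ?andbT //.
have := hke hxR hyR; rewrite /known_edge.
case/orP: hor => h.
  rewrite (subsetP (inner_sub _ hr) _ h).
  have hfx : f x \in ball v' k by rewrite -view_corr //; apply: ltnW.
  by rewrite (subsetP (inner_sub _ hr) _ hfx) !orTb !andbT.
rewrite (subsetP (inner_sub _ hr) _ h).
have hfy : f y \in ball v' k by rewrite -view_corr //; apply: ltnW.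
by rewrite (subsetP (inner_sub _ hr) _ hfy) !orbT !andbT.
Qed.
End View.

Definition domin (G : graph) (K D : {set vert G}) : bool :=
  [forall x in K, (x \in D) || [exists u in D, adj u x]].

Definition sP (G : graph) (K : {set vert G}) (s : nat) : bool :=
  [exists D : {set vert G}, [&& D \subset K, domin K D & #|D| == s]].

Lemma sP_ex (G : graph) (K : {set vert G}) : exists s, sP K s.
Proof.
exists #|K|; apply/existsP; exists K; rewrite subxx eqxx andbT /=.
by apply/forallP => x; apply/implyP => ->.
Qed.

Definition sstar (G : graph) (K : {set vert G}) : nat := ex_minn (sP_ex K).

Definition dec (G : graph) (id : vert G -> nat) (K : {set vert G}) (m : nat) :=
  [set x in K | id x \in CodeSeq.decode m].

Definition good (G : graph) (id : vert G -> nat) (K : {set vert G}) (m : nat) :=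
  domin K (dec id K m) && (#|dec id K m| == sstar K).

Definition c1 (G : graph) (id : vert G -> nat) (K : {set vert G}) :=
  CodeSeq.code [seq id x | x <- enum (odflt set0
     [pick D : {set vert G} | [&& D \subset K, domin K D & #|D| == sstar K]])].

Lemma mP_ex (G : graph) (id : vert G -> nat) (K : {set vert G}) :
  exists m, good id K m || (m == c1 id K).
Proof. by exists (c1 id K); rewrite eqxx orbT. Qed.

Definition mstar (G : graph) (id : vert G -> nat) (K : {set vert G}) : nat :=
  ex_minn (mP_ex id K).

Lemma sstarP (G : graph) (K : {set vert G}) :
  exists2 D : {set vert G}, (D \subset K) && domin K D & #|D| = sstar K.
Proof.
rewrite /sstar; case: ex_minnP => s /existsP [D /and3P [h1 h2 /eqP h3]] _.
by exists D; rewrite ?h1 ?h2.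
Qed.

Lemma sstar_min (G : graph) (K D : {set vert G}) :
  D \subset K -> domin K D -> sstar K <= #|D|.
Proof.
move=> h1 h2; rewrite /sstar; case: ex_minnP => s _ hm; apply: hm.
by apply/existsP; exists D; rewrite h1 h2 eqxx.
Qed.

Lemma c1_good (G : graph) (id : vert G -> nat) (K : {set vert G}) :
  injective id -> good id K (c1 id K).
Proof.
move=> hinj; rewrite /c1; case: pickP => [D /and3P [h1 h2 /eqP h3]|h].
  have e : dec id K (CodeSeq.code [seq id x | x <- enum D]) = D.
    apply/setP => x; rewrite /dec in_set CodeSeq.codeK mem_map // mem_enum.
    by case hx: (x \in D); rewrite ?andbF ?andbT // (subsetP h1).
  by rewrite /good e h2 h3 eqxx.
have [D hD hc] := sstarP K.
by move: (h D); case/andP: hD => -> ->; rewrite hc eqxx.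
Qed.

Lemma mstar_good (G : graph) (id : vert G -> nat) (K : {set vert G}) :
  injective id -> good id K (mstar id K).
Proof.
move=> hinj; rewrite /mstar; case: ex_minnP => m /orP [//|/eqP ->] _.
exact: c1_good.
Qed.

Section Iso.
Variables (G G' : graph) (id : vert G -> nat) (id' : vert G' -> nat).
Variables (K : {set vert G}) (K' : {set vert G'}) (f : vert G -> vert G').
Hypothesis finj : {in K &, injective f}.
Hypothesis fimg : f @: K = K'.
Hypothesis fid : {in K, forall x, id' (f x) = id x}.
Hypothesis fadj : {in K &, forall x y, adj x y = adj (f x) (f y)}.

Lemma iso_card (D : {set vert G}) : D \subset K -> #|f @: D| = #|D|.
Proof.
move=> hD; apply: card_in_imset => x y hx hy; apply: finj; exact: (subsetP hD).
Qed.

Lemma iso_mem (D : {set vert G}) x : D \subset K -> x \in K -> (f x \in f @: D) = (x \in D).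
Proof.
move=> hD hx; apply/imsetP/idP => [[y hy e]|h]; last by exists x.
by rewrite (finj hx (subsetP hD _ hy) e).
Qed.

Lemma iso_domin (D : {set vert G}) : D \subset K -> domin K' (f @: D) = domin K D.
Proof.
move=> hD; apply/forallP/forallP => h x.
  apply/implyP => hx; have := h (f x); rewrite -fimg (imset_f f hx) /= iso_mem //.
  case/orP=> [->//|/existsP [u' /andP [/imsetP [u hu ->] ha]]].
  apply/orP; right; apply/existsP; exists u; rewrite hu fadj //; exact: (subsetP hD).
apply/implyP; rewrite -fimg => /imsetP [y hy ->].
have := h y; rewrite hy /= iso_mem //.
case/orP=> [->//|/existsP [u /andP [hu ha]]].
apply/orP; right; apply/existsP; exists (f u); rewrite (imset_f f hu) -fadj //.
exact: (subsetP hD).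
Qed.

Lemma iso_sP s : sP K s = sP K' s.
Proof.
apply/idP/idP.
  case/existsP => D /and3P [h1 h2 /eqP h3]; apply/existsP.
  exists (f @: D); rewrite iso_domin // h2 iso_card // h3 eqxx -fimg imsetS //.
case/existsP => D' /and3P [h1 h2 /eqP h3]; apply/existsP.
pose D := K :&: f @^-1: D'.
have hDK : D \subset K by apply: subsetIl.
have e : f @: D = D'.
  apply/setP => y; apply/imsetP/idP => [[x]|hy].
    by rewrite in_setI inE => /andP [_ h] ->.
  have : y \in K' by apply: (subsetP h1).
  rewrite -fimg => /imsetP [x hx e]; exists x => //.
  by rewrite in_setI hx inE -e.
exists D; rewrite hDK /= -iso_domin // e h2 -iso_card // e h3 eqxx //.

Qed.

Lemma iso_sstar : sstar K = sstar K'.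
Proof. by apply: eq_ex_minn => s; apply: iso_sP. Qed.

Lemma iso_dec m : dec id' K' m = f @: dec id K m.
Proof.
apply/setP => y; rewrite /dec in_set; apply/idP/imsetP.
  rewrite -fimg => /andP [/imsetP [x hx ->] h]; exists x => //.
  by rewrite in_set hx -fid.
case=> x; rewrite in_set => /andP [hx h] ->.
by rewrite -fimg (imset_f f hx) fid.
Qed.

Lemma iso_good m : good id' K' m = good id K m.
Proof.
have hs : dec id K m \subset K by apply/subsetP => x; rewrite in_set => /andP [].
by rewrite /good iso_dec iso_domin // iso_card // iso_sstar.
Qed.

Lemma iso_mstar : injective id -> injective id' -> mstar id K = mstar id' K'.
Proof.
move=> h h'; apply: eq_ex_minn => m.
have g1 := c1_good K h; have g2 := c1_good K' h'.
rewrite iso_good.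
case hg: (good id K m); first by rewrite !orTb.
rewrite !orFb; apply/eqP/eqP => e.
  by rewrite e g1 in hg.
by rewrite iso_good -e hg in g2.
Qed.
End Iso.

Definition smallv (M : nat) (G : graph) (v : vert G) : bool :=
  (ball v (3 * M).+1 \subset ball v (3 * M)) && (sstar (ball v (3 * M)) <= M).

Definition Balg (A : algorithm) (M : nat) : algorithm :=
  fun G id v => if smallv M v then id v \in CodeSeq.decode (mstar id (ball v (3 * M)))
                else A G id v.

Lemma B_local A M r : local_rounds A r -> local_rounds (Balg A M) (r + 3 * M + 2).
Proof.
move=> hA G id v G' id' v' hid hid' hsv.
have hsv0 := hsv; case: hsv0 => f [hv hb hs hk].
set R := r + 3 * M + 2 in hb hs hk hsv *.
have hinj := hid.1.
set L := 3 * M.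
have hL : L.+1 <= R by rewrite /R /L; lia.
have hL' : L < R by exact: hL.
have corr := @view_corr _ _ _ _ _ _ _ _ hinj hv hb hs hk.
have finj : {in ball v L &, injective f}.
  move=> x y hx hy; apply: (view_inj hinj hb); apply: (subsetP (ball_mono _ (ltnW hL'))); done.
have fimg := view_img hinj hv hb hs hk (ltnW hL').
have fid : {in ball v L, forall x, id' (f x) = id x}.
  by move=> x hx; apply: (hb x (subsetP (ball_mono _ (ltnW hL')) _ hx)).2.
have fadj : {in ball v L &, forall x y, adj x y = adj (f x) (f y)}.
  by move=> x y hx hy; apply: (view_adj hinj hv hb hs hk hL').
have hcl : (ball v L.+1 \subset ball v L) = (ball v' L.+1 \subset ball v' L).
  apply/subsetP/subsetP => h z hz.
    have hzR : z \in ball v' R by apply: (subsetP (ball_mono _ hL)).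
    have [x hxR hfx] := hs _ hzR.
    have h1 : x \in ball v L.+1 by rewrite (corr _ hL _ hxR) hfx.
    by rewrite -hfx -(corr _ (ltnW hL) _ hxR); apply: h.
  have hzR : z \in ball v R by apply: (subsetP (ball_mono _ hL)).
  have h1 : f z \in ball v' L.+1 by rewrite -(corr _ hL _ hzR).
  by rewrite (corr _ (ltnW hL) _ hzR); apply: h.
have hss := iso_sstar finj fimg fadj.
have hsmall : smallv M v = smallv M v'.
  by rewrite /smallv -/L hcl hss.
rewrite /Balg hsmall.
case: (smallv M v').
  rewrite -/L (iso_mstar finj fimg fid fadj hinj hid'.1).
  by rewrite -hv fid // ball_center.
apply: hA => //; apply: (view_mono hinj hv hb hs hk); rewrite /R; lia.
Qed.

Lemma closed_balls (G : graph) (v : vert G) L :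
  ball v L.+1 \subset ball v L -> forall k, ball v k \subset ball v L.
Proof.
move=> hc; elim=> [|k IH].
  by apply/subsetP => x; rewrite /= in_set1 => /eqP ->; apply: ball_center.
apply/subsetP => x; rewrite ballS => /orP [/(subsetP IH)//|/existsP [u /andP [hu ha]]].
by apply: (subsetP hc); apply: ball_adj (subsetP IH _ hu) ha.
Qed.

Lemma domin_hD (G : graph) (K D : {set vert G}) : domin K D ->
  forall x, x \in K -> (x \in D) || [exists d in D, adj d x].
Proof. by move=> /forallP h x hx; have := h x; rewrite hx. Qed.

Lemma small_ball (G : graph) M (v u : vert G) : smallv M v -> u \in ball v (3 * M) ->
  ball u (3 * M) = ball v (3 * M) /\ smallv M u.
Proof.
move=> /andP [hc hs] hu; set L := 3 * M in hc hs hu *.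
have hcl := closed_balls hc.
have hK : forall k, ball u k \subset ball v L.
  move=> k; apply/subsetP => y hy; apply: (subsetP (hcl (L + k))).
  exact: ball_tri hu hy.
have [D /andP [hDK hD] hcard] := sstarP (ball v L).
have e : ball u L = ball v L.
  apply/eqP; rewrite eqEsubset hK /=; apply/subsetP => x hx.
  apply/negPn/negP => hnx.
  have hx2 : x \in ball u (L + L) by apply: ball_tri (ball_sym hu) hx.
  have := ball_count hK (domin_hD hD) hx2 hnx.
  move=> h; have := leq_trans h (subset_leq_card (subsetIl D _)).
  by rewrite hcard ltnNge hs.
split=> //; rewrite /smallv -/L e hs andbT.
apply/subsetP => y hy; exact: (subsetP (hK _) _ hy).
Qed.

Section Correct.
Variables (G : graph) (id : vert G -> nat) (A : algorithm) (M : nat).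
Hypothesis hinj : injective id.
Local Notation L := (3 * M).
Local Notation out := (output (Balg A M) G id).
Definition Tset := [set v : vert G | smallv M v].

Lemma closed_small (v x : vert G) : smallv M v -> x \in ball v L -> forall d, adj d x -> d \in ball v L.
Proof.
move=> /andP [hc _] hx d ha; apply: (subsetP hc).
by apply: ball_adj hx _; rewrite adj_sym.
Qed.

Lemma out_K (u : vert G) : smallv M u ->
  out :&: ball u L = dec id (ball u L) (mstar id (ball u L)).
Proof.
move=> hu; apply/setP => w; rewrite in_setI /output !in_set /Balg.
case hw: (w \in ball u L); last by rewrite andbF.
have [e hsw] := small_ball hu hw.
by rewrite hsw e andbT.
Qed.

Lemma T_part (D : {set vert G}) : dominating D ->
  #|out :&: Tset| <= #|D :&: Tset|.
Proof.
move=> hD.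
suff : forall n (U : {set vert G}), #|U| <= n -> U \subset Tset ->
   (forall u w, u \in U -> w \in ball u L -> w \in U) -> #|out :&: U| <= #|D :&: U|.
  move=> h; apply: (h _ _ (leqnn _) (subxx _)) => u w; rewrite !in_set => hu hw.
  exact: (small_ball hu hw).2.
elim=> [|n IH] U hn hUT hUc.
  by move: hn; rewrite leqn0 cards_eq0 => /eqP ->; rewrite !setI0 cards0.
case: (set_0Vmem U) => [->|[u hu]]; first by rewrite !setI0 cards0.
have hus : smallv M u by move: (subsetP hUT _ hu); rewrite in_set.
set K := ball u L.
have hKU : K \subset U by apply/subsetP => w hw; apply: hUc hu hw.
set U' := U :\: K.
have hU' : #|U'| <= n.
  have : #|U'| < #|U|.
    by apply: proper_card; apply/properP; split; [apply: subsetDl|exists u; rewrite // in_setD ball_center].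
  by move=> h; rewrite -ltnS (leq_trans h hn).
have hU'T : U' \subset Tset by apply: subset_trans (subsetDl _ _) hUT.
have hU'c : forall u0 w, u0 \in U' -> w \in ball u0 L -> w \in U'.
  move=> u0 w; rewrite in_setD => /andP [hnK hu0] hw.
  rewrite in_setD (hUc _ _ hu0 hw) andbT; apply/negP => hwK.
  have hs0 : smallv M u0 by move: (subsetP hUT _ hu0); rewrite in_set.
  have [e1 _] := small_ball hs0 hw.
  have [e2 _] := small_ball hus hwK.
  by move: hnK; rewrite /K -e2 e1 ball_center.
have IH' := IH _ hU' hU'T hU'c.
rewrite -(cardsID K (out :&: U)) -(cardsID K (D :&: U)).
have -> : out :&: U :&: K = out :&: K by rewrite -setIA (setIidPr hKU).
have -> : D :&: U :&: K = D :&: K by rewrite -setIA (setIidPr hKU).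
rewrite -!setIDA; apply: leq_add => //.
rewrite out_K //.
have [hdom /eqP hc] := andP (mstar_good (ball u L) hinj).
rewrite hc; apply: sstar_min; first by apply: subsetIr.
apply/forallP => x; apply/implyP => hx.
have := forallP hD x; case/orP => [hxD|/existsP [d /andP [hd ha]]].
  by rewrite in_setI hxD hx.
apply/orP; right; apply/existsP; exists d.
by rewrite in_setI hd ha (closed_small hus hx ha).
Qed.
End Correct.

Lemma comp_balls (G : graph) (S : {set vert G}) (v : vert G) :
  union_of_components S -> v \in S -> forall k, ball v k \subset S.
Proof.
move=> hS hv; elim=> [|k IH].
  by apply/subsetP => x; rewrite /= in_set1 => /eqP ->.
apply/subsetP => x; rewrite ballS => /orP [/(subsetP IH)//|/existsP [u /andP [hu ha]]].
exact: hS ha (subsetP IH _ hu).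
Qed.

Section Correct2.
Variables (G : graph) (id : vert G -> nat) (A : algorithm) (M : nat).
Hypothesis hinj : injective id.
Local Notation L := (3 * M).
Local Notation out := (output (Balg A M) G id).
Definition Sset := ~: Tset G M.

Lemma S_closed : union_of_components Sset.
Proof.
move=> u v ha; rewrite !in_setC !in_set; apply: contra => hv.
have hu : u \in ball v L.
  have hb : u \in ball v 1 by apply: ball_adj (ball_center v 0) _; rewrite adj_sym.
  case/andP: hv => hc _; apply: (subsetP hc); exact: (subsetP (ball_mono _ (isT : 1 <= L.+1))).
exact: (small_ball hv hu).2.
Qed.

Lemma S_big (D : {set vert G}) (v : vert G) :
  (forall x, x \in Sset -> (x \in D) || [exists d in D, adj d x]) ->
  v \in Sset -> M < #|D|.
Proof.
move=> hD hv.
case hc: (ball v L.+1 \subset ball v L).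
  have hs : M < sstar (ball v L).
    by move: hv; rewrite in_setC in_set /smallv hc /= -ltnNge.
  have hKS : ball v L \subset Sset.
    apply/subsetP => u hu; rewrite in_setC in_set; apply/negP => hsu.
    have := (small_ball hsu (ball_sym hu)).2.
    by move: hv; rewrite in_setC in_set => /negbTE ->.
  apply: (leq_trans hs); apply: leq_trans (subset_leq_card (subsetIl D (ball v L))).
  apply: sstar_min; first exact: subsetIr.
  apply/forallP => x; apply/implyP => hx.
  case/orP: (hD x (subsetP hKS _ hx)) => [hxD|/existsP [d /andP [hd ha]]].
    by rewrite in_setI hxD hx.
  apply/orP; right; apply/existsP; exists d; rewrite in_setI hd ha andbT /=.
  by apply: (subsetP hc); apply: ball_adj hx _; rewrite adj_sym.
have [x hx1 hx2] : exists2 x, x \in ball v L.+1 & x \notin ball v L.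
  by apply/exists_inP; rewrite -negb_forall_in; apply/negP => /forall_inP h;
     move: hc; rewrite (introT subsetP h).
have hK := comp_balls S_closed hv.
have := ball_count hK hD hx1 hx2.
move=> h; apply: leq_trans h (subset_leq_card (subsetIl _ _)).
Qed.

Lemma out_dom_T (v : vert G) : smallv M v ->
  (v \in out) || [exists u in out, adj u v].
Proof.
move=> hv.
have [hdom _] := andP (mstar_good (ball v L) hinj).
have hK := out_K id A hv.
have := domin_hD hdom (ball_center v L).
case/orP => [h|/existsP [u /andP [hu ha]]].
  by rewrite -hK in h; move: h; rewrite in_setI => /andP [->].
rewrite -hK in hu; move: hu; rewrite in_setI => /andP [hu _].
apply/orP; right; apply/existsP; exists u; by rewrite hu ha.
Qed.
End Correct2.

Section Ind.
Variables (G : graph) (S : {set vert G}).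
Hypothesis hS : union_of_components S.
Local Notation GS := (induced S).

Lemma ball_ind (sv y : vert GS) k : (y \in ball sv k) = (val y \in ball (val sv) k).
Proof.
elim: k y => [|k IH] y; first by rewrite /= !in_set1 val_eqE.
rewrite !ballS IH; congr (_ || _); apply/existsP/existsP.
  case=> w /andP [hw ha]; exists (val w); by rewrite -IH hw.
case=> u /andP [hu ha].
have huS : u \in S by apply: (subsetP (comp_balls hS (valP sv) k)).
exists (Sub u huS : vert GS); by rewrite IH SubK hu.
Qed.

Lemma valid_ind (id : vert G -> nat) : valid_ids id -> valid_ids (id \o val : vert GS -> nat).
Proof.
case=> h1 h2; split; last by move=> x; apply: h2.
by move=> x y /h1 /val_inj.
Qed.

Lemma A_ind (A : algorithm) r (id : vert G -> nat) : valid_ids id -> local_rounds A r ->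
  forall sv : vert GS, A G id (val sv) = A GS (id \o val) sv.
Proof.
move=> hid hA sv; apply: hA => //; first exact: valid_ind.
have hbS : forall k x, x \in ball (val sv) k -> x \in S.
  by move=> k x; apply/subsetP/comp_balls => //; apply: valP.
exists (insubd sv); split.
- by rewrite valKd.
- move=> x hx; have hxS := hbS _ _ hx.
  by rewrite ball_ind /= insubdK.
- move=> y hy; exists (val y); first by rewrite -ball_ind.
  by rewrite valKd.
move=> x y hx hy; rewrite /known_edge /=.
rewrite (insubdK sv (hbS _ _ hx)) (insubdK sv (hbS _ _ hy)).
case: r hx hy => [|k] hx hy /=; first by rewrite !in_set0.
by rewrite !ball_ind /= (insubdK sv (hbS _ _ hx)) (insubdK sv (hbS _ _ hy)).
Qed.
End Ind.

Lemma MDS_witness (G : graph) : exists2 D : {set vert G}, dominating D & #|D| = MDS G.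
Proof.
rewrite /MDS; case: ex_minnP => m /existsP [D /andP [h1 /eqP h2]] _.
by exists D.
Qed.

Lemma MDS_min (G : graph) (D : {set vert G}) : dominating D -> MDS G <= #|D|.
Proof.
move=> hD; rewrite /MDS; case: ex_minnP => m _ h; apply: h.
by apply/existsP; exists D; rewrite hD eqxx.
Qed.

Lemma MDS0 (G : graph) (X : {set vert G}) : MDS G = 0 -> #|X| = 0.
Proof.
move=> h0; have [D hD hc] := MDS_witness G.
rewrite h0 in hc; move/eqP: hc; rewrite cards_eq0 => /eqP hD0.
apply/eqP; rewrite cards_eq0; apply/eqP/setP => x; rewrite in_set0.
have := forallP hD x; rewrite hD0 in_set0 /=.
by case/existsP => u; rewrite in_set0.
Qed.

Section Facts.
Variables (G : graph) (id : vert G -> nat) (A : algorithm) (r M : nat).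
Hypothesis hid : valid_ids id.
Hypothesis hA : local_rounds A r.
Local Notation S := (Sset G M).
Local Notation GS := (induced S).
Local Notation out := (output (Balg A M) G id).
Local Notation outA := (output A GS (id \o val)).

Lemma out_S : out :&: S = val @: outA.
Proof.
apply/setP => w; rewrite in_setI /output /Sset in_setC !in_set /Balg.
apply/idP/imsetP.
  case/andP => hw hsw; rewrite (negbTE hsw) in hw.
  have hwS : w \in S by rewrite /Sset in_setC in_set.
  exists (Sub w hwS : vert GS); last by rewrite SubK.
  by rewrite in_set -(A_ind (@S_closed G M) hid hA) /=.
case=> sv; rewrite in_set -(A_ind (@S_closed G M) hid hA) => h ->.
have := valP sv; rewrite /Sset in_setC in_set => hs.
by rewrite (negbTE hs) h.
Qed.

Lemma card_out_S : #|outA| = #|out :&: S|.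
Proof. by rewrite out_S card_imset //; apply: val_inj. Qed.

Lemma out_dom : dominating outA -> dominating out.
Proof.
move=> hdA; apply/forallP => v.
case hv: (smallv M v); first exact: (@out_dom_T G id A M hid.1 v hv).
have hvS : v \in S by rewrite /Sset in_setC in_set hv.
have hsub : val @: outA \subset out by rewrite -out_S subsetIl.
have := forallP hdA (Sub v hvS : vert GS).
case/orP => [h|/existsP [u /andP [hu ha]]].
  by rewrite (subsetP hsub v) //; apply/imsetP; exists (Sub v hvS : vert GS); rewrite ?SubK.
apply/orP; right; apply/existsP; exists (val u).
rewrite (subsetP hsub) ?imset_f //.
Qed.

Lemma MDS_S_le (D : {set vert G}) : dominating D -> MDS GS <= #|D :&: S|.
Proof.
move=> hD.
pose D' := [set y : vert GS | val y \in D].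
have hc : #|D'| = #|D :&: S|.
  have -> : D :&: S = val @: D'.
    apply/setP => x; rewrite in_setI; apply/idP/imsetP.
      case/andP => hx hxS; exists (Sub x hxS : vert GS) => //; by rewrite in_set.
    by case=> y; rewrite in_set => h ->; rewrite h (valP y).
  by rewrite card_imset //; apply: val_inj.
rewrite -hc; apply: MDS_min; apply/forallP => y.
have := forallP hD (val y); case/orP => [h|/existsP [u /andP [hu ha]]].
  by rewrite in_set h.
have huS : u \in S.
  by apply: (@S_closed G M) (valP y); rewrite adj_sym.
apply/orP; right; apply/existsP; exists (Sub u huS : vert GS).
by rewrite in_set; apply/andP; split.
Qed.

Lemma MDS_S_big (v : vert G) : v \in S -> M < MDS GS.
Proof.
move=> hv; have [D' hD' hc] := MDS_witness GS.
rewrite -hc -(card_imset _ val_inj); apply: (S_big (v := v)) => // x hx.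
have := forallP hD' (Sub x hx : vert GS).
case/orP => [h|/existsP [u /andP [hu ha]]].
  by rewrite (_ : x = val (Sub x hx : vert GS)) ?imset_f ?SubK.
apply/orP; right; apply/existsP; exists (val u); rewrite imset_f //.
Qed.
End Facts.

Local Open Scope R_scope.

Theorem mainTheorem15 :
  exists c : R, 0 <= c /\
  forall (alpha beta eps : R) (C : graph -> Prop) (A : algorithm) (r : nat),
    1 <= alpha -> 0 <= beta -> 0 < eps ->
    closed_under_components C ->
    local_rounds A r ->
    (forall (G : graph) (id : vert G -> nat), C G -> valid_ids id ->
       dominating (output A G id) /\
       INR #|output A G id| <= alpha * INR (MDS G) + beta) ->
    exists (B : algorithm) (r' : nat),
      INR r' <= INR r + c * (beta / eps) /\
      local_rounds B r' /\
      (forall (G : graph) (id : vert G -> nat), C G -> valid_ids id ->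
         dominating (output B G id) /\
         INR #|output B G id| <= (alpha + eps) * INR (MDS G)).
Proof.
exists 8; split; first lra.
move=> alpha beta eps C A r ha hb he hC hA hAc.
have hx0 : 0 <= beta / eps.
  by apply: Rmult_le_pos; [lra | left; apply: Rinv_0_lt_compat].
case: (Rle_lt_dec beta eps) => hbe.
  exists A, r; split; first lra.
  split=> // G id hG hid.
  have [hd hc] := hAc G id hG hid; split=> //.
  case hm: (MDS G) => [|m].
    by rewrite (MDS0 (output A G id) hm) /=; lra.
  rewrite hm in hc.
  have h1 : 1 <= INR m.+1 by rewrite S_INR; have := pos_INR m; lra.
  nra.
set x := beta / eps.
have hx1 : 1 < x.
  rewrite /x; apply: (Rmult_lt_reg_r eps) => //.
  by rewrite /Rdiv Rmult_assoc Rinv_l; lra.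
have hbx : beta = eps * x by rewrite /x; field; lra.
have [hup1 hup2] := archimed x.
set M := Z.to_nat (up x).
have hM : INR M = IZR (up x).
  rewrite /M INR_IZR_INZ Z2Nat.id //; apply: le_IZR; lra.
exists (Balg A M), (r + 3 * M + 2)%nat; split.
  rewrite -!plusE -multE !plus_INR hM (_ : INR 2 = 2); last by simpl; lra.
  simpl INR; lra.
split; first exact: B_local.
move=> G id hG hid.
set S := Sset G M.
have hSc : union_of_components S := @S_closed G M.
have [hdA hcA] := hAc (induced S) (id \o val) (hC G S hG hSc) (@valid_ind G S id hid).
split; first exact: (@out_dom G id A r M hid hA hdA).
have [D hD hDc] := MDS_witness G.
rewrite -hDc.
set out := output (Balg A M) G id.
have hT := @T_part G id A M hid.1 D hD.
rewrite -(cardsID (Tset G M) out) -(cardsID (Tset G M) D) !setDE.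
rewrite (_ : out :&: ~: Tset G M = out :&: S) // (_ : D :&: ~: Tset G M = D :&: S) //.
rewrite -(@card_out_S G id A r M hid hA).
have hle := @MDS_S_le G M D hD.
set nT := #|out :&: Tset G M|%nat in hT *.
set dT := #|D :&: Tset G M|%nat in hT *.
set dS := #|D :&: S|%nat in hle *.
set mS := MDS (induced S) in hle hcA *.
set nS := #|output A (induced S) (id \o val)|%nat in hcA *.
have hnT : INR nT <= INR dT by apply: le_INR; apply/leP.
have hmS : INR mS <= INR dS by apply: le_INR; apply/leP.
have hnS : INR nS <= (alpha + eps) * INR dS.
  case: (set_0Vmem S) => [hS0|[v hv]].
    rewrite /nS (@card_out_S G id A r M hid hA) -/S hS0 setI0 cards0 /=.
    have := pos_INR dS; nra.
  have hbig := @MDS_S_big G M v hv.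
  have : INR M + 1 <= INR mS.
    by rewrite -S_INR; apply: le_INR; apply/leP.
  move=> hMm.
  have hb' : beta <= eps * INR mS by rewrite hbx; nra.
  have := pos_INR mS; nra.
rewrite !plus_INR.
have := pos_INR dT; have := pos_INR dS; nra.
Qed.
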